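(* Let $K_n$ be the complete graph on $n$ vertices and $M_k$ a matching of $K_n$ with $k$ edges, and let $K_n\setminus M_k$ be the graph obtained by deleting the edges of $M_k$. Then $K(K_n\setminus M_k)\cong \mathbb{Z}_n^{\,n-2k-2}\oplus \mathbb{Z}_{n(n-2)}^{\,k}$ if $n\ge 2k+2$, and $K(K_n\setminus M_k)\cong \mathbb{Z}_{n-2}\oplus\mathbb{Z}_{n(n-2)}^{\,k-1}$ if $n=2k+1$.
   Context: For a connected graph $G$, the Laplacian matrix $L(G)$ has $(u,u)$-entry the degree of $u$ and $(u,v)$-entry $-m_{uv}$ (minus the number of edges between $u$ and $v$) for $u\ne v$. For a vertex $s$, $L(G,s)$ is $L(G)$ with row and column $s$ deleted, and the critical group is $K(G)=\mathbb{Z}^{V(G)\setminus s}/\mathrm{Im}\,L(G,s)$ (independent of $s$ up to isomorphism). $\mathbb{Z}_d^{\,r}$ denotes the direct sum of $r$ copies of $\mathbb{Z}/d\mathbb{Z}$. *)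

(* Defs.v *)
From mathcomp Require Import all_boot all_order all_algebra.
Set Implicit Arguments. Unset Strict Implicit. Unset Printing Implicit Defensive.
Import GRing.Theory Num.Theory.
Local Open Scope ring_scope.

Definition is_matching (n : nat) (M : {set {set 'I_n}}) : Prop :=
  (forall e, e \in M -> #|e| = 2%N) /\
  (forall e f, e \in M -> f \in M -> e != f -> [disjoint e & f]).

Definition adjKM (n : nat) (M : {set {set 'I_n}}) (u v : 'I_n) : bool :=
  (u != v) && ([set u; v] \notin M).

Definition laplacian (n : nat) (adj : rel 'I_n) : 'M[int]_n :=
  \matrix_(u, v) (if u == v then (#|[set w | adj u w]|)%:Z
                  else - ((adj u v : nat)%:Z)).

Definition red_laplacian (n : nat) (adj : rel 'I_n) (s : 'I_n) : 'M[int]_n.-1 :=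
  \matrix_(i, j) laplacian adj (lift s i) (lift s j).

(* coker_iso A ds : the cokernel Z^m / Im A (A acting on integer column
   vectors) is isomorphic to the direct sum of Z_(d) for d in ds.
   Encoded via the first isomorphism theorem: there is an additive map
   (necessarily an integer matrix P) from Z^m to (+)_i Z_(d_i) that is
   surjective and whose kernel is exactly Im A.  Congruence mod d is
   the intdiv one (mod 0 = equality, so Z_0 = Z). *)
Definition coker_iso (m : nat) (A : 'M[int]_m) (ds : seq int) : Prop :=
  exists P : 'M[int]_(size ds, m),
    (forall y : 'cV[int]_(size ds), exists x : 'cV[int]_m,
        forall i : 'I_(size ds), ((P *m x) i ord0 == y i ord0 %[mod nth 0 ds i])%Z) /\
    (forall x : 'cV[int]_m,
        (forall i : 'I_(size ds), ((P *m x) i ord0 == 0 %[mod nth 0 ds i])%Z)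
        <-> exists v : 'cV[int]_m, x = A *m v).

(* Critical group K(G) = Z^{V \ s} / Im L(G,s) is isomorphic to (+)_{d in ds} Z_d. *)
Definition critical_group_iso (n : nat) (adj : rel 'I_n) (s : 'I_n) (ds : seq int) : Prop :=
  coker_iso (red_laplacian adj s) ds.

(* Main.v *)
Require Import Defs.
From mathcomp Require Import all_boot all_order all_algebra.
From mathcomp Require Import zify ring lra.
Set Implicit Arguments. Unset Strict Implicit. Unset Printing Implicit Defensive.
Import GRing.Theory Num.Theory.

Definition mate (n : nat) (M : {set {set 'I_n}}) (u : 'I_n) : 'I_n :=
  odflt u [pick v | [set u; v] \in M].

Lemma matching_uniq n (M : {set {set 'I_n}}) u v w :
  is_matching M -> [set u; v] \in M -> [set u; w] \in M -> v = w.
Proof.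
move=> [H2 Hd] Hv Hw.
have Huv : u != v.
  apply/negP => /eqP E; move: (H2 _ Hv); rewrite -E setUid cards1 //.
have Huw : u != w.
  apply/negP => /eqP E; move: (H2 _ Hw); rewrite -E setUid cards1 //.
case: (eqVneq [set u; v] [set u; w]) => [E|N].
  have : v \in [set u; w] by rewrite -E !inE eqxx orbT.
  rewrite !inE => /orP [/eqP Evu|/eqP //]; by rewrite Evu eqxx in Huv.
have := Hd _ _ Hv Hw N; move/pred0P/(_ u); rewrite /= !inE !eqxx //.
Qed.

Lemma mateP n (M : {set {set 'I_n}}) u v :
  is_matching M -> ([set u; v] \in M) = ((u != v) && (v == mate M u)).
Proof.
move=> HM; rewrite /mate; case: pickP => [w Hw|H] /=.
- apply/idP/idP.
  + move=> Hv; have -> := matching_uniq HM Hv Hw; rewrite eqxx andbT.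
    apply/negP => /eqP E; move: (HM.1 _ Hw); rewrite -E setUid cards1 //.
  + by case/andP => _ /eqP ->.
- apply/idP/idP; first by rewrite H.
  by case/andP => /negP; rewrite eq_sym => A /eqP B; case: A; rewrite B.
Qed.

Lemma mate_set n (M : {set {set 'I_n}}) u :
  is_matching M -> mate M u != u -> [set u; mate M u] \in M.
Proof. by move=> HM Hne; rewrite mateP // eq_sym Hne eqxx. Qed.

Lemma mateK n (M : {set {set 'I_n}}) u :
  is_matching M -> mate M (mate M u) = u.
Proof.
move=> HM; have [E|Hne] := eqVneq (mate M u) u; first by rewrite !E.
have := mate_set HM Hne; rewrite setUC mateP // => /andP [_ /eqP <-] //.
Qed.

Lemma adjKM_mate n (M : {set {set 'I_n}}) u v :
  is_matching M -> adjKM M u v = (u != v) && (v != mate M u).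
Proof.
move=> HM; rewrite /adjKM mateP //; case: (u != v) => //=.
Qed.

Local Open Scope ring_scope.

Lemma deg_formula n (M : {set {set 'I_n}}) u : is_matching M ->
  (#|[set w | adjKM M u w]|)%:Z = (n.-1)%:Z - (mate M u != u)%:Z.
Proof.
move=> HM.
have [E|Hne] := eqVneq (mate M u) u.
- have -> : [set w | adjKM M u w] = [set~ u].
    by apply/setP => w; rewrite !inE adjKM_mate // E (eq_sym u w) andbb.
  by rewrite cardsC1 card_ord subr0.
- have -> : [set w | adjKM M u w] = ~: [set u; mate M u].
    by apply/setP => w; rewrite !inE adjKM_mate // negb_or eq_sym.
  have h2 : (2 <= n)%N.
    have := max_card [set u; mate M u]; rewrite cards2 eq_sym Hne card_ord //.
  have := cardsC [set u; mate M u]; rewrite cards2 eq_sym Hne card_ord /=.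
  lia.
Qed.



Lemma lap_entry n (M : {set {set 'I_n}}) u v : is_matching M ->
  laplacian (adjKM M) u v = (n.-1)%:Z * (u == v)%:Z + (v == mate M u)%:Z - 1.
Proof.
move=> HM; rewrite /laplacian mxE.
have [Euv|Huv] := eqVneq u v.
- subst v; rewrite deg_formula // mulr1; have [E|Hne] := eqVneq (mate M u) u.
  + rewrite /=; ring.
  + rewrite /=; ring.
- rewrite mulr0 add0r adjKM_mate // Huv /=.
  by case: (v == mate M u).
Qed.

Definition Lf n (M : {set {set 'I_n}}) (z : 'I_n -> int) (u : 'I_n) : int :=
  (n.-1)%:Z * z u + z (mate M u) - \sum_v z v.

Lemma lap_mul n (M : {set {set 'I_n}}) (Z : 'cV[int]_n) u : is_matching M ->
  (laplacian (adjKM M) *m Z) u ord0 = Lf M (fun v => Z v ord0) u.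
Proof.
move=> HM; rewrite mxE /Lf.
under eq_bigr => v _ do rewrite lap_entry // !mulrDl mulN1r.
rewrite sumrB big_split /=.
congr (_ + _ - _).
- rewrite (bigD1 u) //= eqxx mulr1 big1 ?addr0 //.
  by move=> v; rewrite eq_sym => /negPf ->; rewrite mulr0 mul0r.
- rewrite (bigD1 (mate M u)) //= eqxx mul1r big1 ?addr0 //.
  by move=> v /negPf ->; rewrite mul0r.
Qed.

Definition Yf n (M : {set {set 'I_n}}) (z : 'I_n -> int) (u : 'I_n) : int :=
  (n.-1)%:Z * z u - z (mate M u).

Lemma sum_mate n (M : {set {set 'I_n}}) (z : 'I_n -> int) : is_matching M ->
  \sum_v z (mate M v) = \sum_v z v.
Proof.
move=> HM; rewrite [RHS](reindex_inj (can_inj (fun u => mateK u HM))) //.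
Qed.

Lemma n_pos n (u : 'I_n) : (n%:Z = (n.-1)%:Z + 1).
Proof. case: u => /= m; lia. Qed.

Lemma sum_Yf n (M : {set {set 'I_n}}) z : is_matching M ->
  \sum_v Yf M z v = ((n.-1)%:Z - 1) * \sum_v z v.
Proof.
move=> HM; rewrite /Yf sumrB sum_mate // -mulr_sumr; ring.
Qed.

Lemma sum_Lf n (M : {set {set 'I_n}}) z (u0 : 'I_n) : is_matching M ->
  \sum_v Lf M z v = 0.
Proof.
move=> HM; rewrite /Lf sumrB big_split /= sum_mate // -mulr_sumr.
rewrite sumr_const card_ord -mulr_natr natz (n_pos u0); ring.
Qed.

Lemma YLf n (M : {set {set 'I_n}}) w u : is_matching M ->
  Yf M (Lf M w) u = ((n.-1)%:Z ^+ 2 - 1) * w u - ((n.-1)%:Z - 1) * \sum_v w v.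
Proof.
move=> HM; rewrite /Yf /Lf (mateK _ HM); ring.
Qed.

Lemma LYf n (M : {set {set 'I_n}}) z u : is_matching M ->
  Lf M (Yf M z) u = ((n.-1)%:Z ^+ 2 - 1) * z u - ((n.-1)%:Z - 1) * \sum_v z v.
Proof.
move=> HM; rewrite /Lf sum_Yf // /Yf (mateK _ HM); ring.
Qed.

Definition Emx n (s : 'I_n) : 'M[int]_(n, n.-1) :=
  \matrix_(u, j) (if u == s then -1 else (u == lift s j)%:Z).

Definition zx n (s : 'I_n) (x : 'cV[int]_n.-1) (u : 'I_n) : int := (Emx s *m x) u ord0.

Lemma zx_lift n (s : 'I_n) x i : zx s x (lift s i) = x i ord0.
Proof.
have hs : (lift s i == s) = false by rewrite eq_sym (negPf (neq_lift s i)).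
rewrite /zx mxE (bigD1 i) //= mxE hs eqxx mul1r big1 ?addr0 //.
move=> j Hj; rewrite mxE hs (inj_eq (@lift_inj _ s)) eq_sym (negPf Hj) mul0r //.
Qed.

Lemma zx_s n (s : 'I_n) x : zx s x s = - \sum_i x i ord0.
Proof.
rewrite /zx mxE -sumrN; apply: eq_bigr => j _; rewrite mxE eqxx mulN1r //.
Qed.

Lemma sum_zx n (s : 'I_n) x : \sum_u zx s x u = 0.
Proof.
rewrite (bigD1_ord s) //= zx_s; under eq_bigr => i _ do rewrite zx_lift.
by rewrite addNr.
Qed.

Definition ext0 n (s : 'I_n) (v : 'cV[int]_n.-1) (u : 'I_n) : int :=
  if unlift s u is Some i then v i ord0 else 0.

Lemma ext0_lift n (s : 'I_n) v i : ext0 s v (lift s i) = v i ord0.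
Proof. by rewrite /ext0 liftK. Qed.

Lemma ext0_s n (s : 'I_n) v : ext0 s v s = 0.
Proof. by rewrite /ext0 unlift_none. Qed.

Lemma eq_Lf n (M : {set {set 'I_n}}) z z' u : (forall v, z v = z' v) -> Lf M z u = Lf M z' u.
Proof. by move=> E; rewrite /Lf !E; congr (_ - _); apply: eq_bigr. Qed.

Lemma eq_Yf n (M : {set {set 'I_n}}) z z' u : (forall v, z v = z' v) -> Yf M z u = Yf M z' u.
Proof. by move=> E; rewrite /Yf !E. Qed.

Lemma red_mul n (M : {set {set 'I_n}}) (s : 'I_n) v i : is_matching M ->
  (red_laplacian (adjKM M) s *m v) i ord0 = Lf M (ext0 s v) (lift s i).
Proof.
move=> HM.
have -> : Lf M (ext0 s v) (lift s i) = (laplacian (adjKM M) *m \col_u ext0 s v u) (lift s i) ord0.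
  by rewrite lap_mul //; apply: eq_Lf => u; rewrite mxE.
rewrite !mxE (bigD1_ord s) //= mxE ext0_s mulr0 add0r.
apply: eq_bigr => j _; rewrite !mxE ext0_lift //.
Qed.

Lemma zx_Lf n (M : {set {set 'I_n}}) (s : 'I_n) v u : is_matching M ->
  zx s (red_laplacian (adjKM M) s *m v) u = Lf M (ext0 s v) u.
Proof.
move=> HM; case: (unliftP s u) => [i ->|->].
- by rewrite zx_lift red_mul.
- rewrite zx_s; under eq_bigr => i _ do rewrite red_mul //.
  have := sum_Lf (ext0 s v) s HM; rewrite (bigD1_ord s) //= => /eqP.
  by rewrite addr_eq0 => /eqP.
Qed.

Lemma im_char n (M : {set {set 'I_n}}) (s : 'I_n) x : is_matching M -> (2 < n)%N ->
  (exists v, x = red_laplacian (adjKM M) s *m v) <->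
  (forall u, (((n.-1)%:Z ^+ 2 - 1) %| Yf M (zx s x) u - Yf M (zx s x) s)%Z).
Proof.
move=> HM Hn; set N := _ - 1.
split.
- move=> [v ->] u.
  rewrite !(@eq_Yf _ M _ (Lf M (ext0 s v))); try by move=> w; rewrite zx_Lf.
  rewrite !YLf // -/N. 
  have -> : N * ext0 s v u - ((n.-1)%:Z - 1) * \sum_v0 ext0 s v v0 -
            (N * ext0 s v s - ((n.-1)%:Z - 1) * \sum_v0 ext0 s v v0) =
            N * (ext0 s v u - ext0 s v s) by ring.
  exact: dvdz_mulr.
- move=> Hd.
  set y := Yf M (zx s x).
  have HN : N != 0 by rewrite /N expr2; apply/eqP; nia.
  pose w u := ((y u - y s) %/ N)%Z.
  have Hw u : N * w u = y u - y s by rewrite mulrC divzK.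
  exists (\col_i w (lift s i)).
  apply/matrixP => i j; rewrite (ord1 j) red_mul //.
  have Hw0 : forall u, ext0 s (\col_i w (lift s i)) u = w u.
    move=> u; case: (unliftP s u) => [k ->|->]; first by rewrite ext0_lift mxE.
    by rewrite ext0_s /w subrr div0z.
  rewrite (eq_Lf _ _ Hw0) -(zx_lift s).
  apply: (mulfI HN).
  have -> : N * Lf M w (lift s i) = Lf M y (lift s i).
    rewrite /Lf mulrBr mulrDr mulrCA Hw mulr_sumr; under eq_bigr => u _ do rewrite Hw.
    rewrite sumrB sumr_const card_ord -mulr_natr natz (n_pos s) /=.
    rewrite Hw; ring.
  rewrite LYf // sum_zx mulr0 subr0 //.
Qed.

Lemma coker_crit n (s : 'I_n) (A : 'M[int]_n.-1) (ds : seq int) (Q : 'M[int]_(size ds, n)) :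
  (forall x : 'cV[int]_n.-1, (exists v, x = A *m v) <->
     (forall i, (nth 0 ds i %| (Q *m (Emx s *m x)) i ord0)%Z)) ->
  (forall t : 'cV[int]_(size ds), exists x : 'cV[int]_n.-1, forall i, (Q *m (Emx s *m x)) i ord0 = t i ord0) ->
  coker_iso A ds.
Proof.
move=> H1 H2; exists (Q *m Emx s); split.
- move=> y; have [x Hx] := H2 y; exists x => i; rewrite -mulmxA Hx //.
- move=> x; split.
  + by move=> H; apply/H1 => i; move: (H i); rewrite mulmxA eqz_mod_dvd subr0.
  + by move/H1 => H i; move: (H i); rewrite mulmxA eqz_mod_dvd subr0.
Qed.

Lemma zx_of n (s : 'I_n) (z : 'I_n -> int) : \sum_u z u = 0 ->
  forall u, zx s (\col_i z (lift s i)) u = z u.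
Proof.
move=> Hs u; case: (unliftP s u) => [i ->|->]; first by rewrite zx_lift mxE.
rewrite zx_s; move: Hs; rewrite (bigD1_ord s) //= => /eqP; rewrite addr_eq0 => /eqP ->.
by congr (- _); apply: eq_bigr => i _; rewrite mxE.
Qed.

Lemma Emx_zx n (s : 'I_n) x : Emx s *m x = \col_u zx s x u.
Proof. by apply/matrixP => u j; rewrite (ord1 j) [RHS]mxE. Qed.

Lemma sum_delta n (z : 'I_n -> int) (a : 'I_n) :
  \sum_v (v == a)%:Z * z v = z a.
Proof.
rewrite (bigD1 a) //= eqxx mul1r big1 ?addr0 // => v /negPf ->; rewrite mul0r //.
Qed.

Definition Ufix n (M : {set {set 'I_n}}) := [set u | mate M u == u].
Definition Bset n (M : {set {set 'I_n}}) := [set u : 'I_n | (u < mate M u)%N].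
Definition B2set n (M : {set {set 'I_n}}) := [set u : 'I_n | (mate M u < u)%N].

Lemma card_Bset n (M : {set {set 'I_n}}) : is_matching M -> #|Bset M| = #|M|.
Proof.
move=> HM.
have Hi : {in Bset M &, injective (fun b => [set b; mate M b])}.
  move=> b b'; rewrite !inE => Hb Hb' E.
  have : b' \in [set b; mate M b] by rewrite E !inE eqxx.
  rewrite !inE => /orP [/eqP //|/eqP Eb'].
  move: Hb'; rewrite Eb' mateK //; lia.
rewrite -(card_in_imset Hi).
suff -> : [set [set b; mate M b] | b in Bset M] = M by [].
apply/setP => e; apply/imsetP/idP.
- move=> [b]; rewrite inE => Hb ->; apply: mate_set => //.
  by apply/negP => /eqP E; move: Hb; rewrite E ltnn.
- move=> He; have /cards2P [x [y [Hxy Ee]]] : #|e| == 2%N by rewrite HM.1.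
  move: He; rewrite Ee mateP // Hxy /= => /eqP Ey.
  subst y; case: (ltngtP x (mate M x)) => Hl.
  + by exists x; rewrite ?inE.
  + exists (mate M x); first by rewrite inE mateK.
    by rewrite mateK // setUC.
  + by move: Hxy; rewrite -(val_inj Hl) eqxx.
Qed.

Lemma card_B2set n (M : {set {set 'I_n}}) : is_matching M -> #|B2set M| = #|Bset M|.
Proof.
move=> HM; rewrite -(card_in_imset (f := mate M) (D := mem (Bset M))); last first.
  by move=> a b _ _; apply: (can_inj (fun u => mateK u HM)).
suff -> : [set mate M x | x in Bset M] = B2set M by [].
apply/setP => u; rewrite [in RHS]inE; apply/imsetP/idP.
- by move=> [b]; rewrite inE => Hb ->; rewrite mateK.
- move=> Hu; exists (mate M u); rewrite ?inE mateK //.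
Qed.

Lemma card_fix_part n (M : {set {set 'I_n}}) : is_matching M ->
  (#|Ufix M| + 2 * #|M| = n)%N.
Proof.
move=> HM.
have E : ~: Ufix M = Bset M :|: B2set M.
  apply/setP => u; rewrite !inE; case: (ltngtP u (mate M u)) => H /=.
  - by apply/negP => /eqP E; move: H; rewrite E ltnn.
  - by apply/negP => /eqP E; move: H; rewrite E ltnn.
  - by rewrite -(val_inj H) eqxx.
have D : Bset M :&: B2set M = set0.
  by apply/setP => u; rewrite !inE; apply/negP => /andP [] ; lia.
have := cardsC (Ufix M); rewrite E cardsU D cards0 card_B2set // card_Bset // card_ord.
lia.
Qed.

Definition comp1 n (M : {set {set 'I_n}}) (r : 'I_n) (p : nat) (W : seq 'I_n)
  (i : nat) (z : 'I_n -> int) : int :=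
  let w := nth r W i in
  if (i < p)%N then z w - z r
  else (n.-1)%:Z * z (mate M w) - z w - ((n.-1)%:Z - 1) * z r.

Lemma sum_delta' n (z : 'I_n -> int) (a : 'I_n) :
  \sum_v (a == v)%:Z * z v = z a.
Proof. by under eq_bigr => v _ do rewrite eq_sym; rewrite sum_delta. Qed.

Lemma comp1_lin n (M : {set {set 'I_n}}) r p W i (z : 'I_n -> int) :
  \sum_v comp1 M r p W i (fun u => (u == v)%:Z) * z v = comp1 M r p W i z.
Proof.
rewrite /comp1; case: (i < p)%N.
- under eq_bigr => v _ do rewrite mulrBl.
  by rewrite sumrB !sum_delta'.
- set w := nth r W i.
  rewrite (eq_bigr (fun v => (n.-1)%:Z * ((mate M w == v)%:Z * z v) - (w == v)%:Z * z v
     - ((n.-1)%:Z - 1) * ((r == v)%:Z * z v))); last by move=> v _; ring.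
  by rewrite !sumrB -!mulr_sumr !sum_delta'.
Qed.

Lemma Yf_fix n (M : {set {set 'I_n}}) z r : mate M r = r -> Yf M z r = ((n.-1)%:Z - 1) * z r.
Proof. by move=> E; rewrite /Yf E; ring. Qed.

Lemma dvdzD (d a b : int) : (d %| a)%Z -> (d %| b)%Z -> (d %| a + b)%Z.
Proof. exact: rpredD. Qed.
Lemma dvdzB (d a b : int) : (d %| a)%Z -> (d %| b)%Z -> (d %| a - b)%Z.
Proof. exact: rpredB. Qed.
Lemma dvdzN (d a : int) : (d %| a)%Z -> (d %| - a)%Z.
Proof. by move=> h; rewrite -mulN1r; apply: dvdz_mull. Qed.

Lemma dvd_sum (N : int) (I : finType) (F : I -> int) :
  (forall i, (N %| F i)%Z) -> (N %| \sum_i F i)%Z.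
Proof.
move=> H; apply: (big_ind (fun a => (N %| a)%Z)) => //.
by move=> a b; apply: dvdzD.
Qed.

Definition Up n (M : {set {set 'I_n}}) (r r' : 'I_n) := Ufix M :\: [set r; r'].
Definition W1 n (M : {set {set 'I_n}}) (r r' : 'I_n) := enum (Up M r r') ++ enum (Bset M).

Lemma W1_facts n (M : {set {set 'I_n}}) r r' :
  [/\ (forall j, (j < #|Up M r r'|)%N -> nth r (W1 M r r') j \in Up M r r'),
      (forall j, (#|Up M r r'| <= j)%N -> (j < size (W1 M r r'))%N -> nth r (W1 M r r') j \in Bset M),
      (forall u, u \in Up M r r' -> (index u (W1 M r r') < #|Up M r r'|)%N /\ nth r (W1 M r r') (index u (W1 M r r')) = u),
      (forall u, u \in Bset M -> [/\ (#|Up M r r'| <= index u (W1 M r r'))%N,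
                     (index u (W1 M r r') < size (W1 M r r'))%N & nth r (W1 M r r') (index u (W1 M r r')) = u])
    & size (W1 M r r') = (#|Up M r r'| + #|Bset M|)%N].
Proof.
have Hs : size (W1 M r r') = (#|Up M r r'| + #|Bset M|)%N by rewrite /W1 size_cat -!cardE.
split => //.
- move=> j Hj; rewrite /W1 nth_cat -cardE Hj.
  by rewrite -[_ \in Up _ _ _]mem_enum; apply: mem_nth; rewrite -cardE.
- move=> j Hj Hj'; rewrite /W1 nth_cat -cardE ltnNge Hj /=.
  rewrite -mem_enum; apply: mem_nth; rewrite -!cardE; move: Hj'; rewrite Hs ltn_subLR //.
- move=> u Hu; split; last by apply: nth_index; rewrite mem_cat mem_enum Hu.
  by rewrite /W1 index_cat mem_enum Hu cardE index_mem mem_enum.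
- move=> u Hu.
  have Hn : u \notin Up M r r'.
    move: Hu; rewrite !inE => H; apply/negP => /andP [_ /eqP E]; move: H; rewrite E ltnn //.
  rewrite /W1 index_cat mem_enum (negPf Hn) -cardE; split.
  + exact: leq_addr.
  + by rewrite size_cat -!cardE ltn_add2l cardE index_mem mem_enum.
  + by rewrite nth_cat -cardE ltnNge leq_addr /= addKn nth_index // mem_enum.
Qed.

Lemma y_pair n (M : {set {set 'I_n}}) z u r : is_matching M -> mate M r = r ->
  Yf M z u - Yf M z r =
  (((n.-1)%:Z)^+2 - 1) * (z (mate M u) - z r) - (n.-1)%:Z * (Yf M z (mate M u) - Yf M z r).
Proof. by move=> HM Hr; rewrite /Yf (mateK _ HM) Hr; ring. Qed.

Lemma sum_y_ref n (M : {set {set 'I_n}}) z r : is_matching M -> mate M r = r ->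
  \sum_u z u = 0 ->
  \sum_u (Yf M z u - Yf M z r) = - ((((n.-1)%:Z)^+2 - 1) * z r).
Proof.
move=> HM Hr Hz; rewrite sumrB sum_Yf // Hz sumr_const card_ord -mulr_natr natz (n_pos r).
rewrite /Yf Hr; ring.
Qed.

Lemma kernel1 n (M : {set {set 'I_n}}) r r' (z : 'I_n -> int) :
  is_matching M -> (2 < n)%N -> r \in Ufix M -> r' \in Ufix M -> r != r' ->
  \sum_u z u = 0 ->
  (forall u, ((((n.-1)%:Z)^+2 - 1) %| Yf M z u - Yf M z r)%Z) <->
  (forall j, (j < size (W1 M r r'))%N ->
     ((if (j < #|Up M r r'|)%N then (n.-1)%:Z + 1 else ((n.-1)%:Z)^+2 - 1)
        %| comp1 M r #|Up M r r'| (W1 M r r') j z)%Z).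
Proof.
move=> HM Hn Hr Hr' Hrr Hz.
have [F1 F2 F3 F4 Fs] := W1_facts M r r'.
set c := (n.-1)%:Z; set N := c ^+ 2 - 1.
have Hc : c - 1 != 0 by rewrite /c; apply/eqP; lia.
have EN : N = (c - 1) * (c + 1) by rewrite /N; ring.
have Hrf : mate M r = r by move: Hr; rewrite inE => /eqP.
have Yfix u : mate M u = u -> Yf M z u - Yf M z r = (c - 1) * (z u - z r).
  by move=> Hu; rewrite !Yf_fix // /c; ring.
split.
- move=> H j Hj; rewrite /comp1; case: ifP => Hjp.
  + have := F1 _ Hjp; rewrite !inE => /andP [_ /eqP Hw].
    by rewrite -(dvdz_mul2l Hc) -EN -Yfix.
  + have -> : c * z (mate M (nth r (W1 M r r') j)) - z (nth r (W1 M r r') j) - (c - 1) * z r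
        = Yf M z (mate M (nth r (W1 M r r') j)) - Yf M z r.
      by rewrite /Yf (mateK _ HM) Hrf /c; ring.
    exact: H.
- move=> H.
  have Hoth u : u != r' -> (N %| Yf M z u - Yf M z r)%Z.
    move=> Hur'.
    case: (ltngtP u (mate M u)) => Hl.
    + have Hu : u \in Bset M by rewrite inE.
      have [Hp Hs' Hnth] := F4 _ Hu.
      have := H _ Hs'; rewrite ltnNge Hp /= /comp1 ltnNge Hp /= Hnth => Hd.
      rewrite y_pair // -/c -/N; apply: dvdzB; first exact: dvdz_mulr.
      apply: dvdz_mull.
      by move: Hd; rewrite /Yf (mateK _ HM) Hrf -/c; congr (_ %| _)%Z; ring.
    + have Hu : mate M u \in Bset M by rewrite inE (mateK _ HM).
      have [Hp Hs' Hnth] := F4 _ Hu.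
      have := H _ Hs'; rewrite ltnNge Hp /= /comp1 ltnNge Hp /= Hnth (mateK _ HM) => Hd.
      by move: Hd; rewrite /Yf Hrf -/c; congr (_ %| _)%Z; ring.
    + have Hu : mate M u = u by apply: val_inj.
      have [->|Hur] := eqVneq u r; first by rewrite subrr dvdz0.
      have Hu' : u \in Up M r r' by rewrite !inE Hu eqxx negb_or Hur Hur'.
      have [Hp Hnth] := F3 _ Hu'.
      have := H _ (leq_trans Hp (leq_trans (leq_addr _ _) (eq_leq (esym Fs)))).
      rewrite Hp /comp1 Hp Hnth => Hd.
      by rewrite Yfix // EN dvdz_mul2l.
  move=> u; have [->|] := eqVneq u r'; last exact: Hoth.
  have Hs := sum_y_ref HM Hrf Hz; rewrite (bigD1 r') //= -/c -/N in Hs.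
  have -> : Yf M z r' - Yf M z r = - (N * z r) - \sum_(i | i != r') (Yf M z i - Yf M z r).
    by rewrite -Hs; ring.
  apply: dvdzB; first by apply: dvdzN; apply: dvdz_mulr.
  apply: (big_ind (fun a => (N %| a)%Z)) => //; first by move=> a b; apply: dvdzD.
Qed.

Lemma W1_uniq n (M : {set {set 'I_n}}) r r' : uniq (W1 M r r').
Proof.
rewrite /W1 cat_uniq !enum_uniq andbT /=; apply/hasPn => u; rewrite !mem_enum !inE.
move=> Hu; apply/negP => /andP [_ /eqP E]; move: Hu; rewrite E ltnn //.
Qed.

Lemma surj1 n (M : {set {set 'I_n}}) r r' (t : nat -> int) :
  is_matching M -> r \in Ufix M -> r' \in Ufix M -> r != r' ->
  exists z : 'I_n -> int, \sum_u z u = 0 /\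
    forall j, (j < size (W1 M r r'))%N -> comp1 M r #|Up M r r'| (W1 M r r') j z = t j.
Proof.
move=> HM Hr Hr' Hrr.
have [F1 F2 F3 F4 Fs] := W1_facts M r r'.
set W := W1 M r r'.
pose z0 v := if v \in Up M r r' then t (index v W) else if v \in Bset M then - t (index v W) else 0.
pose z v := z0 v - (v == r')%:Z * \sum_u z0 u.
have Hz : forall v, v != r' -> z v = z0 v.
  by move=> v /negPf Hv; rewrite /z Hv mul0r subr0.
exists z; split.
  by rewrite /z sumrB (sum_delta (fun _ => \sum_u z0 u)) subrr.
have Hrf : mate M r = r by move: Hr; rewrite inE => /eqP.
have zr : z r = 0.
  rewrite Hz // /z0 !inE eqxx /= Hrf ltnn /=.
  by case: (mate M r == r).
move=> j Hj; rewrite /comp1; case: ifP => Hjp.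
- have Hw := F1 _ Hjp.
  have Hw' : nth r W j != r'.
    by move: Hw; rewrite !inE negb_or => /andP [/andP [_ ->]].
  rewrite zr subr0 Hz // /z0 Hw index_uniq //; first exact: W1_uniq.
- have Hjp' : (#|Up M r r'| <= j)%N by rewrite leqNgt Hjp.
  have Hw := F2 _ Hjp' Hj; rewrite -/W in Hw.
  have Hr'f : mate M r' = r' by move: Hr'; rewrite inE => /eqP.
  have Hw' : nth r W j != r'.
    by apply/negP => /eqP E; move: Hw; rewrite E inE Hr'f ltnn.
  have Hmw : mate M (nth r W j) != r'.
    apply/negP => /eqP E; have := mateK (nth r W j) HM; rewrite E Hr'f => Ew.
    by move: Hw'; rewrite -Ew eqxx.
  rewrite zr mulr0 subr0 Hz // Hz // /z0.
  have -> : (mate M (nth r W j) \in Up M r r') = false.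
    apply/negP; rewrite !inE (mateK _ HM) => /andP [_ /eqP E]; move: Hw; rewrite inE -E ltnn //.
  have -> : (mate M (nth r W j) \in Bset M) = false.
    apply/negP; rewrite !inE (mateK _ HM) => H1; move: Hw; rewrite inE => H2; move: (ltn_trans H1 H2); rewrite ltnn //.
  have -> : (nth r W j \in Up M r r') = false.
    apply/negP; rewrite !inE => /andP [_ /eqP E]; move: Hw; rewrite inE E ltnn //.
  rewrite Hw index_uniq //; last exact: W1_uniq.
  by rewrite mulr0 sub0r opprK.
Qed.

Lemma Q1_mul n (M : {set {set 'I_n}}) r p W (s : 'I_n) m (x : 'cV[int]_n.-1) (i : 'I_m) :
  ((\matrix_(i0 < m, v < n) comp1 M r p W i0 (fun u => (u == v)%:Z)) *m (Emx s *m x)) i ord0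
  = comp1 M r p W i (zx s x).
Proof.
rewrite mxE -comp1_lin; apply: eq_bigr => v _; rewrite mxE //.
Qed.

Lemma eq_comp1 n (M : {set {set 'I_n}}) r p W i z z' :
  (forall v, z v = z' v) -> comp1 M r p W i z = comp1 M r p W i z'.
Proof. by move=> E; rewrite /comp1 !E. Qed.

Lemma ref_change n (M : {set {set 'I_n}}) (N : int) z (a b : 'I_n) :
  (forall u, (N %| Yf M z u - Yf M z a)%Z) -> (forall u, (N %| Yf M z u - Yf M z b)%Z).
Proof.
move=> H u; have -> : Yf M z u - Yf M z b = (Yf M z u - Yf M z a) - (Yf M z b - Yf M z a) by ring.
by apply: dvdzB.
Qed.

Lemma nth_ds a b (x y : int) i : (i < a + b)%N ->
  nth 0 (nseq a x ++ nseq b y) i = if (i < a)%N then x else y.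
Proof.
move=> Hi; rewrite nth_cat size_nseq; case: ifP => H; rewrite nth_nseq ?H //.
by rewrite ltn_subLR ?Hi // leqNgt H.
Qed.

Lemma PoszN n : (2 <= n)%N -> Posz (n * (n - 2)) = ((n.-1)%:Z)^+2 - 1.
Proof.
move=> Hn; rewrite PoszM.
have -> : Posz (n - 2) = (n.-1)%:Z - 1 by lia.
have -> : Posz n = (n.-1)%:Z + 1 by lia.
ring.
Qed.

Lemma case1 n (M : {set {set 'I_n}}) (s : 'I_n) k : is_matching M -> #|M| = k ->
  (2 * k + 2 <= n)%N -> (2 < n)%N ->
  critical_group_iso (adjKM M) s
     (nseq (n - 2 * k - 2) (Posz n) ++ nseq k (Posz (n * (n - 2)))).
Proof.
move=> HM Hk Hkn Hn.
have HU := card_fix_part HM; rewrite Hk in HU.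
have [r [r' [Hr Hr' Hrr]]] : exists r r', [/\ r \in Ufix M, r' \in Ufix M & r != r'].
  apply/card_gt1P; lia.
have Hp : #|Up M r r'| = (n - 2 * k - 2)%N.
  rewrite /Up cardsDS; last by apply/subsetP => u /set2P [] ->.
  rewrite cards2 Hrr /=; move: HU; set a := #|Ufix M|; set b := #|Ufix M|; lia.
have HB : #|Bset M| = k by rewrite card_Bset.
have [F1 F2 F3 F4 Fs] := W1_facts M r r'.
have Hdi : forall i : nat, (i < n - 2 * k - 2 + k)%N ->
   nth 0 (nseq (n - 2 * k - 2) (Posz n) ++ nseq k (Posz (n * (n - 2)))) i =
       (if (i < #|Up M r r'|)%N then (n.-1)%:Z + 1 else ((n.-1)%:Z)^+2 - 1).
  move=> i Hi; rewrite nth_ds // Hp PoszN; last lia.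
  case: ifP => //; rewrite (n_pos s) //.
set ds := (nseq _ _ ++ _).
have Hds : size ds = (n - 2 * k - 2 + k)%N by rewrite /ds size_cat !size_nseq.
have Hsz : size ds = size (W1 M r r') by rewrite Fs /ds size_cat !size_nseq Hp HB.
apply: (coker_crit (Q := \matrix_(i0 < size ds, v < n) comp1 M r #|Up M r r'| (W1 M r r') i0 (fun u => (u == v)%:Z))).
- move=> x; rewrite im_char //.
  split.
  + move=> H i; rewrite Q1_mul Hdi; last by rewrite -Hds.
    have := (kernel1 HM Hn Hr Hr' Hrr (sum_zx s x)).1 (@ref_change _ _ _ _ s r H); apply.
    by rewrite -Hsz.
  + move=> H; apply: ref_change.
    apply/(kernel1 HM Hn Hr Hr' Hrr (sum_zx s x)) => j Hj.
    have Hj' : (j < size ds)%N by rewrite Hsz.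
    have := H (Ordinal Hj'); rewrite Q1_mul Hdi //; by rewrite -Hds.
- move=> t.
  pose tt (j : nat) := if insub j is Some i then t i ord0 else 0 : int.
  have [z [Hz Hc]] := surj1 tt HM Hr Hr' Hrr.
  exists (\col_i z (lift s i)) => i; rewrite Q1_mul.
  rewrite (@eq_comp1 _ _ _ _ _ _ _ z (zx_of s Hz)) Hc; last by rewrite -Hsz.
  by rewrite /tt valK.
Qed.

Definition comp2 n (M : {set {set 'I_n}}) (r : 'I_n) (W : seq 'I_n)
  (i : nat) (z : 'I_n -> int) : int :=
  let w := nth r W i in
  if i == 0%N then z (mate M w) - z w
  else (n.-1)%:Z * z (mate M w) - z w - ((n.-1)%:Z - 1) * z r.

Lemma comp2_lin n (M : {set {set 'I_n}}) r W i (z : 'I_n -> int) :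
  \sum_v comp2 M r W i (fun u => (u == v)%:Z) * z v = comp2 M r W i z.
Proof.
rewrite /comp2; case: (i == 0%N).
- under eq_bigr => v _ do rewrite mulrBl.
  by rewrite sumrB !sum_delta'.
- set w := nth r W i.
  rewrite (eq_bigr (fun v => (n.-1)%:Z * ((mate M w == v)%:Z * z v) - (w == v)%:Z * z v
     - ((n.-1)%:Z - 1) * ((r == v)%:Z * z v))); last by move=> v _; ring.
  by rewrite !sumrB -!mulr_sumr !sum_delta'.
Qed.

Lemma Q2_mul n (M : {set {set 'I_n}}) r W (s : 'I_n) m (x : 'cV[int]_n.-1) (i : 'I_m) :
  ((\matrix_(i0 < m, v < n) comp2 M r W i0 (fun u => (u == v)%:Z)) *m (Emx s *m x)) i ord0
  = comp2 M r W i (zx s x).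
Proof.
rewrite mxE -comp2_lin; apply: eq_bigr => v _; rewrite mxE //.
Qed.

Lemma eq_comp2 n (M : {set {set 'I_n}}) r W i z z' :
  (forall v, z v = z' v) -> comp2 M r W i z = comp2 M r W i z'.
Proof. by move=> E; rewrite /comp2 !E. Qed.

Definition W2 n (M : {set {set 'I_n}}) (b1 : 'I_n) := b1 :: enum (Bset M :\ b1).

Lemma W2_facts n (M : {set {set 'I_n}}) r b1 : b1 \in Bset M ->
  [/\ (forall j, (j < size (W2 M b1))%N -> nth r (W2 M b1) j \in Bset M),
      (forall u, u \in Bset M -> (index u (W2 M b1) < size (W2 M b1))%N /\ nth r (W2 M b1) (index u (W2 M b1)) = u),
      uniq (W2 M b1)
    & size (W2 M b1) = #|Bset M|].
Proof.
move=> Hb1.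
have Hs : size (W2 M b1) = #|Bset M| by rewrite /W2 /= -cardE [RHS](cardsD1 b1) Hb1.
have Hm : forall u, (u \in W2 M b1) = (u \in Bset M).
  move=> u; rewrite /W2 inE mem_enum !inE; case: eqVneq => [->|] //=.
  by move: Hb1; rewrite inE.
split => //.
- by move=> j Hj; rewrite -Hm; apply: mem_nth.
- by move=> u Hu; rewrite index_mem nth_index ?Hm.
- by rewrite /W2 /= enum_uniq mem_enum !inE eqxx.
Qed.


Lemma kernel2 n (M : {set {set 'I_n}}) r b1 (z : 'I_n -> int) :
  is_matching M -> (2 < n)%N -> ~~ odd n.-1 -> Ufix M = [set r] -> b1 \in Bset M ->
  \sum_u z u = 0 ->
  (forall u, ((((n.-1)%:Z)^+2 - 1) %| Yf M z u - Yf M z r)%Z) <->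
  (forall j, (j < size (W2 M b1))%N ->
     ((if j == 0%N then (n.-1)%:Z - 1 else ((n.-1)%:Z)^+2 - 1)
        %| comp2 M r (W2 M b1) j z)%Z).
Proof.
move=> HM Hn Hev HU Hb1 Hz.
have [F1 F2 Fu Fs] := W2_facts r Hb1.
set c := (n.-1)%:Z; set N := c ^+ 2 - 1.
have Hc : c + 1 != 0 by rewrite /c; apply/eqP; lia.
have EN : N = (c + 1) * (c - 1) by rewrite /N; ring.
have Hrf : mate M r = r by apply/eqP; rewrite -(in_set (fun u => mate M u == u)) -/(Ufix M) HU inE.
have Hfix u : mate M u = u -> u = r.
  by move=> Hu; apply/set1P; rewrite -HU inE Hu.
have Hb1' : (b1 < mate M b1)%N by move: Hb1; rewrite inE.
set a1 := mate M b1.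
have Hdiff : Yf M z a1 - Yf M z b1 = (c + 1) * (z a1 - z b1).
  by rewrite /Yf /a1 (mateK _ HM) /c; ring.
have Hb1pos : index b1 (W2 M b1) = 0%N by rewrite /W2 /= eqxx.
split.
- move=> H j Hj; rewrite /comp2; case: ifP => Hj0.
  + move/eqP: Hj0 => ->; rewrite /= -/a1.
    rewrite -(dvdz_mul2l Hc) -EN -Hdiff.
    have -> : Yf M z a1 - Yf M z b1 = (Yf M z a1 - Yf M z r) - (Yf M z b1 - Yf M z r) by ring.
    by apply: dvdzB.
  + have -> : c * z (mate M (nth r (W2 M b1) j)) - z (nth r (W2 M b1) j) - (c - 1) * z r
        = Yf M z (mate M (nth r (W2 M b1) j)) - Yf M z r.
      by rewrite /Yf (mateK _ HM) Hrf /c; ring.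
    exact: H.
- move=> H.
  have Hoth u : u != a1 -> u != b1 -> (N %| Yf M z u - Yf M z r)%Z.
    move=> Ha Hb.
    case: (ltngtP u (mate M u)) => Hl.
    + have Hu : u \in Bset M by rewrite inE.
      have [Hs' Hnth] := F2 _ Hu.
      have Hj0 : (index u (W2 M b1) == 0%N) = false.
        by rewrite /W2 /= (eq_sym b1 u) (negPf Hb).
      have := H _ Hs'; rewrite Hj0 /comp2 Hj0 Hnth => Hd.
      rewrite y_pair // -/c -/N; apply: dvdzB; first exact: dvdz_mulr.
      apply: dvdz_mull.
      by move: Hd; rewrite /Yf (mateK _ HM) Hrf -/c; congr (_ %| _)%Z; ring.
    + have Hu : mate M u \in Bset M by rewrite inE (mateK _ HM).
      have [Hs' Hnth] := F2 _ Hu.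
      have Hj0 : (index (mate M u) (W2 M b1) == 0%N) = false.
        have Hne : mate M u != b1.
          by apply/negP => /eqP E; move: Ha; rewrite /a1 -E (mateK _ HM) eqxx.
        by rewrite /W2 /= (eq_sym b1) (negPf Hne).
      have := H _ Hs'; rewrite Hj0 /comp2 Hj0 Hnth (mateK _ HM) => Hd.
      by move: Hd; rewrite /Yf Hrf -/c; congr (_ %| _)%Z; ring.
    + have Hu : mate M u = u by apply: val_inj.
      by rewrite (Hfix _ Hu) subrr dvdz0.
  have Hab : a1 != b1 by apply/negP => /eqP E; move: Hb1'; rewrite -/a1 E ltnn.
  have Hs := sum_y_ref HM Hrf Hz; rewrite (bigD1 a1) //= (bigD1 b1) //= -/c -/N in Hs.
  set S := \sum_(i | _) _ in Hs.
  have HS : (N %| S)%Z.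
    apply: (big_ind (fun a => (N %| a)%Z)) => //; first by move=> x y; apply: dvdzD.
    by move=> i /andP [Hia Hib]; apply: Hoth.
  have H0 := H 0%N; rewrite /= in H0; have {}H0 := H0 isT.
  rewrite /comp2 /= -/a1 in H0.
  have Hd : (N %| Yf M z a1 - Yf M z b1)%Z by rewrite Hdiff EN; apply: dvdz_mul.
  have Hsum : (N %| (Yf M z a1 - Yf M z r) + (Yf M z b1 - Yf M z r))%Z.
    have -> : (Yf M z a1 - Yf M z r) + (Yf M z b1 - Yf M z r) = - (N * z r) - S by rewrite -Hs; ring.
    by apply: dvdzB => //; apply: dvdzN; apply: dvdz_mulr.
  have [h Hh] : exists h, c = 2 * h.
    exists (n.-1./2)%:Z; rewrite /c -PoszM mul2n; congr Posz.
    by rewrite -[LHS](odd_double_half n.-1) (negPf Hev) add0n.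
  have half : forall a, (N %| 2 * a)%Z -> (N %| a)%Z.
    move=> a Ha; have -> : a = (2 * h * h) * (2 * a) - N * a by rewrite /N Hh; ring.
    by apply: dvdzB; [apply: dvdz_mull | apply: dvdz_mulr].
  have Ha1 : (N %| Yf M z a1 - Yf M z r)%Z.
    apply: half; have -> : 2 * (Yf M z a1 - Yf M z r) =
       ((Yf M z a1 - Yf M z r) + (Yf M z b1 - Yf M z r)) + (Yf M z a1 - Yf M z b1) by ring.
    by apply: dvdzD.
  have Hb1d : (N %| Yf M z b1 - Yf M z r)%Z.
    have -> : Yf M z b1 - Yf M z r = (Yf M z a1 - Yf M z r) - (Yf M z a1 - Yf M z b1) by ring.
    by apply: dvdzB.
  move=> u; have [->|Hua] := eqVneq u a1; first exact: Ha1.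
  have [->|Hub] := eqVneq u b1; first exact: Hb1d.
  exact: Hoth.
by rewrite eq_sym.
Qed.

Lemma coker_crit2 n (s : 'I_n) (A : 'M[int]_n.-1) (ds : seq int) (Q : 'M[int]_(size ds, n)) :
  (forall x : 'cV[int]_n.-1, (exists v, x = A *m v) <->
     (forall i, (nth 0 ds i %| (Q *m (Emx s *m x)) i ord0)%Z)) ->
  (forall t : 'cV[int]_(size ds), exists x : 'cV[int]_n.-1,
      forall i, (nth 0 ds i %| (Q *m (Emx s *m x)) i ord0 - t i ord0)%Z) ->
  coker_iso A ds.
Proof.
move=> H1 H2; exists (Q *m Emx s); split.
- move=> y; have [x Hx] := H2 y; exists x => i; rewrite -mulmxA eqz_mod_dvd; exact: Hx.
- move=> x; split.
  + by move=> H; apply/H1 => i; move: (H i); rewrite mulmxA eqz_mod_dvd subr0.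
  + by move/H1 => H i; move: (H i); rewrite mulmxA eqz_mod_dvd subr0.
Qed.

Lemma surj2 n (M : {set {set 'I_n}}) r b1 (t : nat -> int) :
  is_matching M -> ~~ odd n.-1 -> Ufix M = [set r] -> b1 \in Bset M ->
  exists z : 'I_n -> int, \sum_u z u = 0 /\
    forall j, (j < size (W2 M b1))%N ->
      ((if j == 0%N then (n.-1)%:Z - 1 else ((n.-1)%:Z)^+2 - 1)
        %| comp2 M r (W2 M b1) j z - t j)%Z.
Proof.
move=> HM Hev HU Hb1.
have [F1 F2 Fu Fs] := W2_facts r Hb1.
set W := W2 M b1.
set c := (n.-1)%:Z.
have [h Hh] : exists h, c = 2 * h.
  exists (n.-1./2)%:Z; rewrite /c -PoszM mul2n; congr Posz.
  by rewrite -[LHS](odd_double_half n.-1) (negPf Hev) add0n.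
have Hrf : mate M r = r by apply/eqP; rewrite -(in_set (fun u => mate M u == u)) -/(Ufix M) HU inE.
have Hb1' : (b1 < mate M b1)%N by move: Hb1; rewrite inE.
set a1 := mate M b1.
have Hab : a1 != b1 by apply/negP => /eqP E; move: Hb1'; rewrite -/a1 E ltnn.
pose z0 v := if v \in Bset M :\ b1 then - t (index v W) else 0.
set R := \sum_u z0 u.
pose al := h * (t 0%N - R).
pose z v := z0 v + (v == a1)%:Z * al + (v == b1)%:Z * (- R - al).
have za1 : z0 a1 = 0.
  rewrite /z0 !inE /a1 (mateK _ HM); case: ifP => // /andP [_ H]; move: H; lia.
have zb1 : z0 b1 = 0 by rewrite /z0 !inE eqxx.
have Hbr : r \notin Bset M by rewrite inE Hrf ltnn.
have Hra : r != a1.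
  apply/negP => /eqP E; have := Hrf; rewrite E /a1 (mateK _ HM) => Eb; move: Hb1'; rewrite -Eb ltnn //.
have Hrb : r != b1 by apply/negP => /eqP E; move: Hbr; rewrite E Hb1.
have zr : z r = 0.
  rewrite /z (negPf Hra) (negPf Hrb) /z0 !inE Hrf ltnn andbF /=; ring.
exists z; split.
  rewrite /z !big_split /= -/R (sum_delta (fun _ => al)) (sum_delta (fun _ => - R - al)); ring.
move=> j Hj; rewrite /comp2; case: ifP => Hj0.
- move/eqP: Hj0 => Hj0; subst j; rewrite /= -/a1.
  rewrite /z za1 zb1 eqxx (negPf Hab) eq_sym (negPf Hab) /al.
  rewrite eqxx /=.
  have E : forall X, X = (c - 1) * (t 0%N - R) -> (c - 1 %| X)%Z.
    by move=> X ->; apply: dvdz_mulr; rewrite dvdzz.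
  apply: E; rewrite Hh; ring.
- have Hw : nth r W j \in Bset M :\ b1.
    case: j Hj Hj0 => // j Hj _; rewrite /W /W2 /= -mem_enum; apply: mem_nth.
    by move: Hj; rewrite /W2 /=.
  move: (Hw); rewrite !inE => /andP [Hwb Hwl].
  have Hmw : mate M (nth r W j) \notin Bset M :\ b1.
    by rewrite !inE (mateK _ HM) negb_and; apply/orP; right; move: Hwl; lia.
  have Hma : mate M (nth r W j) != a1.
    by apply/negP => /eqP E; move: Hwb; rewrite -[nth _ _ _](mateK _ HM) E /a1 (mateK _ HM) eqxx.
  have Hmb : mate M (nth r W j) != b1.
    apply/negP => /eqP E; move: Hb1'; rewrite -E (mateK _ HM); move: Hwl; lia.
  have Hwa : nth r W j != a1.
    apply/negP => /eqP E; move: Hwl; rewrite E /a1 (mateK _ HM); move: Hb1'; lia.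
  rewrite zr mulr0 subr0 /z (negPf Hma) (negPf Hmb) (negPf Hwa) (negPf Hwb) /z0 (negPf Hmw) Hw.
  rewrite index_uniq //.
  have -> : c * (0 + 0 * al + 0 * (- R - al)) - (- t j + 0 * al + 0 * (- R - al)) - t j = 0 by ring.
  by rewrite dvdz0.
Qed.

Lemma case2 n (M : {set {set 'I_n}}) (s : 'I_n) k : is_matching M -> #|M| = k ->
  (0 < k)%N -> n = (2 * k + 1)%N ->
  critical_group_iso (adjKM M) s
     (Posz (n - 2) :: nseq (k - 1) (Posz (n * (n - 2)))).
Proof.
move=> HM Hk Hk0 Hn.
have HU := card_fix_part HM; rewrite Hk in HU.
have [r Hr] : exists r, Ufix M = [set r].
  apply/cards1P; move: HU; set a := #|Ufix M|; set b := #|Ufix M|; lia.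
have HB : #|Bset M| = k by rewrite card_Bset.
have [b1 Hb1] : exists b1, b1 \in Bset M by apply/card_gt0P; rewrite HB.
have [F1 F2 Fu Fs] := W2_facts r Hb1.
have Hev : ~~ odd n.-1 by rewrite Hn addn1 /= oddM.
have Hn2 : (2 < n)%N by lia.
have Hdi : forall i : nat, (i < k)%N ->
   nth 0 (Posz (n - 2) :: nseq (k - 1) (Posz (n * (n - 2)))) i =
       (if i == 0%N then (n.-1)%:Z - 1 else ((n.-1)%:Z)^+2 - 1).
  move=> [|i] Hi /=; first by lia.
  by rewrite nth_nseq ifT ?PoszN //; lia.
set ds := (_ :: _).
have Hds : size ds = k by rewrite /ds /= size_nseq; lia.
have Hsz : size ds = size (W2 M b1) by rewrite Fs Hds HB.
apply: (coker_crit2 (Q := \matrix_(i0 < size ds, v < n) comp2 M r (W2 M b1) i0 (fun u => (u == v)%:Z))).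
- move=> x; rewrite im_char //.
  split.
  + move=> H i; rewrite Q2_mul Hdi; last by rewrite -Hds.
    have := (kernel2 HM Hn2 Hev Hr Hb1 (sum_zx s x)).1 (@ref_change _ _ _ _ s r H); apply.
    by rewrite -Hsz.
  + move=> H; apply: ref_change.
    apply/(kernel2 HM Hn2 Hev Hr Hb1 (sum_zx s x)) => j Hj.
    have Hj' : (j < size ds)%N by rewrite Hsz.
    have := H (Ordinal Hj'); rewrite Q2_mul Hdi //; by rewrite -Hds.
- move=> t.
  pose tt (j : nat) := if insub j is Some i then t i ord0 else 0 : int.
  have [z [Hz Hc]] := surj2 tt HM Hev Hr Hb1.
  exists (\col_i z (lift s i)) => i; rewrite Q2_mul Hdi; last by rewrite -Hds.
  rewrite (@eq_comp2 _ _ _ _ _ _ z (zx_of s Hz)).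
  have := Hc i; rewrite /tt valK; apply; by rewrite -Hsz.
Qed.

Lemma case_n2 (M : {set {set 'I_2}}) (s : 'I_2) : is_matching M -> #|M| = 0%N ->
  critical_group_iso (adjKM M) s [::].
Proof.
move=> HM H0.
have Hm : forall u, mate M u = u.
  move=> u; have E : M = set0 by apply/eqP; rewrite -cards_eq0 H0.
  by rewrite /mate; case: pickP => // v; rewrite E inE.
exists 0; split.
- by move=> y; exists 0 => -[].
- move=> x; split => [_|]; last by move=> _ [].
  exists x; apply/matrixP => i j; rewrite (ord1 i) (ord1 j) red_mul // /Lf Hm.
  rewrite (bigD1_ord s) //= ext0_s big_ord1 ext0_lift /=; ring.
Qed.

Local Close Scope ring_scope.

Theorem proposition5p2 (n k : nat) (M : {set {set 'I_n}}) (s : 'I_n) :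
  is_matching M -> #|M| = k ->
  ((2 * k + 2 <= n)%N ->
     critical_group_iso (adjKM M) s
       (nseq (n - 2 * k - 2) (Posz n) ++ nseq k (Posz (n * (n - 2))))) /\
  ((0 < k)%N -> n = (2 * k + 1)%N ->
     critical_group_iso (adjKM M) s
       (Posz (n - 2) :: nseq (k - 1) (Posz (n * (n - 2))))).
Proof.
move=> HM Hk; split.
- move=> Hkn; case: (ltnP 2 n) => Hn; first exact: case1.
  have En : n = 2%N by lia.
  have Ek : k = 0%N by lia.
  subst n.
  rewrite Ek; have H0 : #|M| = 0%N by rewrite Hk Ek.
  by have := case_n2 s HM H0.
- by move=> Hk0 Hn; apply: case2.
Qed.
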